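(* Let $N$ be a natural number, and let $\mathcal{T}_N$ be the class of all finite reflexive graphs $G$ whose vertex set can be written as a disjoint union $G_e\cup G_c\cup G_f$ such that: the graph induced on $G_e$ is empty; the graph induced on $G_c$ is complete; $|G_f|\le N$; and the connections between $G_e$ and $G_c$ are uniform, i.e. for all $x,y\in G_e$ and all $z,t\in G_c$, $x$ is adjacent to $z$ if and only if $y$ is adjacent to $t$. Then $\mathcal{T}_N$ is well quasi-ordered under both the standard and the strong homomorphic image orderings.
   Context: A graph is a digraph (set with binary relation $E$) whose edge relation is symmetric; a reflexive graph has a loop at every vertex. Empty means no edges between distinct vertices; complete means all pairs of distinct vertices are adjacent. A homomorphism maps edges to edges (in reflexive graphs, an edge or a non-edge may be collapsed to a single vertex); it is strong if additionally every edge of the target among vertices of the image is the image of an edge. Standard homomorphic image ordering: $A\preceq B$ iff there is a surjective homomorphism $B\to A$; strong: iff there is a surjective strong homomorphism $B\to A$. Well quasi-ordered means no infinite strictly decreasing sequence and no infinite antichain; structures considered up to isomorphism. *)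

(* Defs.v *)
From mathcomp Require Import all_boot.
Set Implicit Arguments. Unset Strict Implicit. Unset Printing Implicit Defensive.

Record rgraph := RGraph {
  vtx : finType;
  adj : rel vtx;
  adj_sym : symmetric adj;
  adj_refl : reflexive adj
}.

(* Homomorphism: maps edges to edges (in reflexive graphs collapsing an
   edge or non-edge to a vertex is automatically allowed via loops). *)
Definition is_hom (G H : rgraph) (f : vtx G -> vtx H) : Prop :=
  forall x y, adj x y -> adj (f x) (f y).

Definition is_strong_hom (G H : rgraph) (f : vtx G -> vtx H) : Prop :=
  is_hom f /\
  forall u v, (exists x, f x = u) -> (exists y, f y = v) -> adj u v ->
    exists x y, [/\ f x = u, f y = v & adj x y].

Definition surj (A B : Type) (f : A -> B) : Prop := forall b, exists a, f a = b.

Definition hom_image_le (A B : rgraph) : Prop :=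
  exists f : vtx B -> vtx A, is_hom f /\ surj f.

Definition strong_hom_image_le (A B : rgraph) : Prop :=
  exists f : vtx B -> vtx A, is_strong_hom f /\ surj f.

Definition wqo_on (C : rgraph -> Prop) (le : rgraph -> rgraph -> Prop) : Prop :=
  (~ exists s : nat -> rgraph,
       (forall n, C (s n)) /\
       (forall n, le (s n.+1) (s n) /\ ~ le (s n) (s n.+1))) /\
  (~ exists s : nat -> rgraph,
       (forall n, C (s n)) /\
       (forall i j, i <> j -> ~ le (s i) (s j))).

Definition in_TN (N : nat) (G : rgraph) : Prop :=
  exists Ge Gc Gf : {set vtx G},
    [/\ [/\ [disjoint Ge & Gc], [disjoint Ge & Gf], [disjoint Gc & Gf]
          & Ge :|: Gc :|: Gf = setT],
        (forall x y, x \in Ge -> y \in Ge -> x != y -> ~~ adj x y),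
        (forall x y, x \in Gc -> y \in Gc -> x != y -> adj x y),
        #|Gf| <= N
      & (forall x y z t, x \in Ge -> y \in Ge -> z \in Gc -> t \in Gc ->
           adj x z = adj y t)].

(* Main.v *)
Require Import Defs.
From mathcomp Require Import all_boot zify.
From Stdlib Require Import Classical ClassicalEpsilon.
Set Implicit Arguments. Unset Strict Implicit. Unset Printing Implicit Defensive.

Lemma exists_min (P : nat -> Prop) : (exists n, P n) ->
  exists n, P n /\ forall m, P m -> n <= m.
Proof.
move=> ex.
pose Pb n := if excluded_middle_informative (P n) then true else false.
have PbP n : Pb n <-> P n by rewrite /Pb; case: excluded_middle_informative.
have ex' : exists n, Pb n by case: ex => n hn; exists n; apply/PbP.
exists (ex_minn ex'); case: ex_minnP => m hm hmin; split; first by apply/PbP.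
by move=> k /PbP; apply: hmin.
Qed.

Lemma lemA (f : nat -> nat) : exists phi : nat -> nat,
  (forall n, phi n < phi n.+1) /\ (forall n, f (phi n) <= f (phi n.+1)).
Proof.
have nxt a : exists b, a < b /\ forall c, a < c -> f b <= f c.
  have [v [[b [ab fb]] hv]] := exists_min (P := fun v => exists c, a < c /\ f c = v)
     (ex_intro _ (f a.+1) (ex_intro _ a.+1 (conj (ltnSn a) erefl))).
  exists b; split => // c ac; rewrite fb; apply: hv; by exists c.
pose nx a := proj1_sig (constructive_indefinite_description _ (nxt a)).
have nxP a : a < nx a /\ forall c, a < c -> f (nx a) <= f c.
  by rewrite /nx; case: constructive_indefinite_description.
exists (fun n => iter n.+1 nx 0); split => n.
  by rewrite [iter n.+2 _ _]/=; case: (nxP (iter n.+1 nx 0)).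
rewrite [iter n.+1 _ _]/=; case: (nxP (iter n nx 0)) => h1 h2; apply: h2.
rewrite [iter n.+2 _ _]/=; case: (nxP (iter n.+1 nx 0)) => h3 _.
by apply: ltn_trans h3; rewrite [iter n.+1 _ _]/=.
Qed.

Lemma lemB (K : finType) (g : nat -> K) : exists phi : nat -> nat,
  (forall n, phi n < phi n.+1) /\ exists k, forall n, g (phi n) = k.
Proof.
have [k hk] : exists k, forall a, exists b, a < b /\ g b = k.
  apply: NNPP => H.
  have hb k : exists a, forall b, a < b -> g b <> k.
    have := not_ex_all_not _ _ H k => /not_all_ex_not [a ha]; exists a => b ab gb.
    by apply: ha; exists b.
  pose bd k := proj1_sig (constructive_indefinite_description _ (hb k)).
  have bdP k : forall b, bd k < b -> g b <> k.
    by rewrite /bd; case: constructive_indefinite_description.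
  pose M := \max_(k : K) bd k.
  apply: (bdP (g M.+1) M.+1) => //; rewrite ltnS.
  exact: (leq_bigmax (F := bd)).
pose nx a := proj1_sig (constructive_indefinite_description _ (hk a)).
have nxP a : a < nx a /\ g (nx a) = k.
  by rewrite /nx; case: constructive_indefinite_description.
exists (fun n => iter n.+1 nx 0); split => [n|]; last by exists k => n; case: (nxP (iter n nx 0)).
by rewrite [iter n.+2 _ _]/=; case: (nxP (iter n.+1 nx 0)).
Qed.

Lemma dickson (K I : finType) (key : nat -> K) (c : nat -> I -> nat) :
  exists i j, i < j /\ key i = key j /\ forall t, c i t <= c j t.
Proof.
have main : forall ts : seq I, exists phi : nat -> nat,
   (forall n, phi n < phi n.+1) /\ (exists k, forall n, key (phi n) = k) /\
   forall t, t \in ts -> forall n, c (phi n) t <= c (phi n.+1) t.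
  2: by have [phi [inc [[k hk] hm]]] := main (enum I); exists (phi 0), (phi 1);
    split; [exact: inc | split; [by rewrite !hk | move=> t; apply: hm; rewrite mem_enum]].
elim => [|t ts [phi [inc [[k hk] hm]]]].
  have [phi [inc hk]] := lemB key; by exists phi.
have [psi [inc' hm']] := lemA (fun n => c (phi n) t).
have phimono : {homo phi : i j / i < j >-> i < j}.
  by apply: homo_ltn => // y x z; apply: ltn_trans.
exists (fun n => phi (psi n)); split; first by move=> n; apply: phimono.
split; first by exists k.
move=> t'; rewrite inE => /orP [/eqP -> | ht] n; first exact: hm'.
have := homo_leq (f := fun m => c (phi m) t') (r := leq) (@leqnn) _ (hm t' ht).
move=> -> //; first by move=> y x z; apply: leq_trans.
exact: ltnW.
Qed.

Definition TNprop (N : nat) (G : Defs.rgraph) (Ge Gc Gf : {set vtx G}) : Prop :=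
    [/\ [/\ [disjoint Ge & Gc], [disjoint Ge & Gf], [disjoint Gc & Gf]
          & Ge :|: Gc :|: Gf = setT],
        (forall x y, x \in Ge -> y \in Ge -> x != y -> ~~ adj x y),
        (forall x y, x \in Gc -> y \in Gc -> x != y -> adj x y),
        #|Gf| <= N
      & (forall x y z t, x \in Ge -> y \in Ge -> z \in Gc -> t \in Gc ->
           adj x z = adj y t)].

Definition Cls (N : nat) := ('I_N.+1 + (bool * {set 'I_N.+1}))%type.
Definition Key (N : nat) := ({ffun 'I_N.+1 * 'I_N.+1 -> bool} * bool * {ffun Cls N -> bool})%type.

Definition fv (G : Defs.rgraph) (Gf : {set vtx G}) (j : nat) : option (vtx G) :=
  nth None (map Some (enum Gf)) j.
Arguments fv {G} Gf j.
Definition lbl N (G : Defs.rgraph) (Gf : {set vtx G}) (v : vtx G) : 'I_N.+1 :=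
  inord (index v (enum Gf)).
Arguments lbl N {G} Gf v.
Definition typ N (G : Defs.rgraph) (Gf : {set vtx G}) (v : vtx G) : {set 'I_N.+1} :=
  [set j : 'I_N.+1 | if fv Gf j is Some x then adj v x else false].
Arguments typ N {G} Gf v.
Definition cls N (G : Defs.rgraph) (Gc Gf : {set vtx G}) (v : vtx G) : Cls N :=
  if v \in Gf then inl (lbl N Gf v) else inr (v \in Gc, typ N Gf v).
Arguments cls N {G} Gc Gf v.
Definition CC N (G : Defs.rgraph) (Gc Gf : {set vtx G}) (c : Cls N) : {set vtx G} :=
  [set v | cls N Gc Gf v == c].
Arguments CC N {G} Gc Gf c.
Definition key N (G : Defs.rgraph) (Ge Gc Gf : {set vtx G}) : Key N :=
  ([ffun p : 'I_N.+1 * 'I_N.+1 => match fv Gf p.1, fv Gf p.2 with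
                        Some x, Some y => adj x y | _, _ => false end],
   [exists x in Ge, exists z in Gc, adj x z],
   [ffun c => #|CC N Gc Gf c| == 0]).
Arguments key N {G} Ge Gc Gf.

Definition Aof (N : nat) (k : Key N) (c d : Cls N) : bool :=
 let: (fa, bt, _) := k in
 match c, d with
 | inl i, inl j => fa (i, j)
 | inl i, inr (_, S0) => i \in S0
 | inr (_, S0), inl j => j \in S0
 | inr (b1, _), inr (b2, _) => if b1 == b2 then b1 else bt
 end.

Lemma fv_lbl N (G : Defs.rgraph) (Gf : {set vtx G}) v : v \in Gf -> #|Gf| <= N ->
  fv Gf (lbl N Gf v) = Some v.
Proof.
move=> vG hN; have hi : index v (enum Gf) < size (enum Gf) by rewrite index_mem mem_enum.
rewrite /lbl /fv inordK; last by move: hi; rewrite -cardE; lia.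
by rewrite (nth_map v) // nth_index // mem_enum.
Qed.

Lemma adjA N (G : Defs.rgraph) (Ge Gc Gf : {set vtx G}) x y :
  TNprop N Ge Gc Gf -> x != y ->
  adj x y = Aof (key N Ge Gc Gf) (cls N Gc Gf x) (cls N Gc Gf y).
Proof.
case=> [[dEC dEF dCF cov] hE hC hN hU] nxy.
have cov' v : v \notin Gf -> (v \in Ge) || (v \in Gc).
  move=> h; have : v \in Ge :|: Gc :|: Gf by rewrite cov inE.
  by rewrite !inE (negbTE h) orbF.
have dis v : v \in Gc -> v \in Ge = false.
  by move=> h; apply/negP => h'; move/disjointFr: dEC => /(_ v h'); rewrite h.
rewrite /cls /Aof /key.
case: ifP => xf; case: ifP => yf.
- by rewrite ffunE /= !fv_lbl.
- by rewrite inE fv_lbl // adj_sym.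
- by rewrite inE fv_lbl.
have := cov' x (negbT xf); have := cov' y (negbT yf).
case: (boolP (x \in Gc)) => xc; case: (boolP (y \in Gc)) => yc /=; rewrite ?orbF => ye xe.
- by rewrite hC.
- apply/idP/existsP => [h|[x' /andP [x'e /existsP [z' /andP [z'c h]]]]].
    by exists y; rewrite ye /=; apply/existsP; exists x; rewrite xc adj_sym.
  by rewrite adj_sym (hU y x' x z').
- apply/idP/existsP => [h|[x' /andP [x'e /existsP [z' /andP [z'c h]]]]].
    by exists x; rewrite xe /=; apply/existsP; exists y; rewrite yc.
  by rewrite (hU x x' y z').
- by apply/negbTE/hE.
Qed.

Lemma cls_hom N (G H : Defs.rgraph) (Ge Gc Gf : {set vtx G}) (He Hc Hf : {set vtx H})
  (f : vtx H -> vtx G) :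
  TNprop N Ge Gc Gf -> TNprop N He Hc Hf -> key N Ge Gc Gf = key N He Hc Hf ->
  (forall v, cls N Gc Gf (f v) = cls N Hc Hf v) -> is_hom f.
Proof.
move=> WG WH ek hf x y hxy.
case: (eqVneq (f x) (f y)) => [->|ne]; first exact: adj_refl.
have nxy : x != y by apply: contraNneq ne => ->.
by rewrite (adjA WG ne) !hf ek -(adjA WH nxy).
Qed.

Lemma key_good N (G H : Defs.rgraph) (Ge Gc Gf : {set vtx G}) (He Hc Hf : {set vtx H}) :
  TNprop N Ge Gc Gf -> TNprop N He Hc Hf -> key N Ge Gc Gf = key N He Hc Hf ->
  (forall c, #|CC N Gc Gf c| <= #|CC N Hc Hf c|) -> strong_hom_image_le G H.
Proof.
move=> WG WH ek hc.
have zpE c : (#|CC N Gc Gf c| == 0) = (#|CC N Hc Hf c| == 0).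
  by have := congr1 (fun k : Key N => k.2 c) ek; rewrite /= !ffunE.
have memC v : v \in CC N Hc Hf (cls N Hc Hf v) by rewrite inE.
have memCG v : v \in CC N Gc Gf (cls N Gc Gf v) by rewrite inE.
have posG v : 0 < #|CC N Gc Gf (cls N Hc Hf v)|.
  rewrite lt0n zpE -lt0n; apply/card_gt0P; by exists v.
have [x0 _|H0] := pickP (fun _ : vtx H => true).
  have /card_gt0P [y0 _] := posG x0.
  pose f v := nth y0 (enum (CC N Gc Gf (cls N Hc Hf v)))
     (minn (index v (enum (CC N Hc Hf (cls N Hc Hf v)))) (#|CC N Gc Gf (cls N Hc Hf v)|).-1).
  pose s u := nth x0 (enum (CC N Hc Hf (cls N Gc Gf u)))
     (index u (enum (CC N Gc Gf (cls N Gc Gf u)))).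
  have fC v : f v \in CC N Gc Gf (cls N Hc Hf v).
    rewrite -mem_enum; apply: mem_nth; rewrite -cardE; have := posG v; lia.
  have clsf v : cls N Gc Gf (f v) = cls N Hc Hf v by have := fC v; rewrite inE => /eqP.
  have iG u : index u (enum (CC N Gc Gf (cls N Gc Gf u))) < #|CC N Gc Gf (cls N Gc Gf u)|.
    by rewrite cardE index_mem mem_enum.
  have sC u : s u \in CC N Hc Hf (cls N Gc Gf u).
    rewrite -mem_enum; apply: mem_nth; rewrite -cardE; apply: leq_trans (iG u) (hc _).
  have clss u : cls N Hc Hf (s u) = cls N Gc Gf u by have := sC u; rewrite inE => /eqP.
  have fs u : f (s u) = u.
    rewrite /f clss /s index_uniq ?enum_uniq //; last by rewrite -cardE; apply: leq_trans (iG u) (hc _).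
    have := iG u => h; rewrite (_ : minn _ _ = index u (enum (CC N Gc Gf (cls N Gc Gf u)))); last by lia.
    by rewrite nth_index // mem_enum.
  have homf : is_hom f by apply: (cls_hom WG WH ek).
  have homs : is_hom s by apply: (cls_hom WH WG (esym ek)).
  exists f; split; last by move=> b; exists (s b).
  split => // u v _ _ huv; exists (s u), (s v); split; by [rewrite fs | apply: homs].
have HF : forall v : vtx H, False by move=> v; have := H0 v.
have GF : forall u : vtx G, False.
  move=> u; have : 0 < #|CC N Hc Hf (cls N Gc Gf u)|.
    by rewrite lt0n -zpE -lt0n; apply/card_gt0P; exists u.
  by case/card_gt0P => v _; apply: HF v.
exists (fun v => False_rect _ (HF v)); split.
  split; first by move=> x; case: (HF x).
  by move=> x; case: (GF x).
by move=> b; case: (GF b).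
Qed.

Lemma in_TN_sig N (G : Defs.rgraph) : in_TN N G ->
  {t : {set vtx G} * {set vtx G} * {set vtx G} | TNprop N t.1.1 t.1.2 t.2}.
Proof.
move=> h; apply: constructive_indefinite_description.
case: h => Ge [Gc [Gf h]]; by exists (Ge, Gc, Gf).
Qed.

Lemma good_seq N (s : nat -> Defs.rgraph) : (forall n, in_TN N (s n)) ->
  exists i j, i < j /\ strong_hom_image_le (s i) (s j).
Proof.
move=> hs.
pose W n := in_TN_sig (hs n).
pose k n : Key N := key N (proj1_sig (W n)).1.1 (proj1_sig (W n)).1.2 (proj1_sig (W n)).2.
pose c n (cl : Cls N) := #|CC N (proj1_sig (W n)).1.2 (proj1_sig (W n)).2 cl|.
have [i [j [ij [ek hc]]]] := dickson k c.
exists i, j; split => //.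
exact: (key_good (proj2_sig (W i)) (proj2_sig (W j)) ek hc).
Qed.

Lemma wqo_from (C : Defs.rgraph -> Prop) (le : Defs.rgraph -> Defs.rgraph -> Prop) :
  (forall A, le A A) -> (forall A B D, le A B -> le B D -> le A D) ->
  (forall s, (forall n, C (s n)) -> exists i j, i < j /\ le (s i) (s j)) ->
  wqo_on C le.
Proof.
move=> refl trans good; split.
  case=> s [hs hd]; have [i [j [ij hij]]] := good s hs.
  have chain m : le (s (i.+1 + m)) (s i.+1).
    elim: m => [|m IH]; first by rewrite addn0.
    by apply: trans IH; rewrite addnS; case: (hd (i.+1 + m)).
  have := chain (j - i.+1); rewrite subnKC // => hj.
  by case: (hd i) => _; apply; apply: trans hij hj.
case=> s [hs ha]; have [i [j [ij hij]]] := good s hs.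
by apply: (ha i j) => //; move=> e; rewrite e ltnn in ij.
Qed.

Lemma strong_hom_le A B : strong_hom_image_le A B -> hom_image_le A B.
Proof. by case=> f [[hf _] sf]; exists f. Qed.

Theorem theorem2p8 (N : nat) :
  wqo_on (in_TN N) hom_image_le /\ wqo_on (in_TN N) strong_hom_image_le.
Proof.
split; apply: wqo_from.
- by move=> A; exists id; split => // b; exists b.
- move=> A B D [f [hf sf]] [g [hg sg]]; exists (fun x => f (g x)); split.
    by move=> x y h; apply: hf; apply: hg.
  by move=> a; case: (sf a) => b <-; case: (sg b) => d <-; exists d.
- move=> s hs; have [i [j [ij h]]] := good_seq hs; exists i, j; split => //.
  exact: strong_hom_le.
- move=> A; exists id; split => [|b]; last by exists b.
  by split => // u v _ _ h; exists u, v.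
- move=> A B D [f [[hf stf] sf]] [g [[hg stg] sg]]; exists (fun x => f (g x)); split.
    split; first by move=> x y h; apply: hf; apply: hg.
    move=> u v _ _ huv.
    have [b1 [b2 [e1 e2 hb]]] := stf u v (sf u) (sf v) huv.
    have [d1 [d2 [e3 e4 hd]]] := stg b1 b2 (sg b1) (sg b2) hb.
    by exists d1, d2; rewrite e3 e4.
  by move=> a; case: (sf a) => b <-; case: (sg b) => d <-; exists d.
- exact: good_seq.
Qed.
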